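(* If $F$ satisfies Assumption 1, then for every $v\in[0,1]$ with $F(b^*_{v,F})>0$, $$F(b^*_{v,F})\ \ge\ \frac{F(v)}{e}.$$
   Context: Assumption 1: $F$ is a cumulative distribution function on $[0,1]$ which is continuously differentiable with density $f=F'$ and is strictly log-concave (equivalently $f/F$ is strictly decreasing on $(0,1)$). $U_{v,F}(b)=(v-b)F(b)$ and $b^*_{v,F}=\max\{\operatorname{argmax}_{b\in[0,1]}U_{v,F}(b)\}$. *)

(* Defs.v *)
From Stdlib Require Export Reals.
Open Scope R_scope.

Definition I01 (x : R) : Prop := 0 <= x <= 1.

Definition is_cdf01 (F : R -> R) : Prop :=
  (forall x, I01 x -> 0 <= F x <= 1) /\
  (forall x y, I01 x -> I01 y -> x <= y -> F x <= F y) /\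
  F 1 = 1.

Definition has_derivative_on01 (F f : R -> R) : Prop :=
  forall x, I01 x ->
    limit1_in (fun y => (F y - F x) / (y - x))
              (fun y => I01 y /\ y <> x) (f x) x.

Definition continuous_on01 (g : R -> R) : Prop :=
  forall x, I01 x -> forall eps, 0 < eps ->
    exists delta, 0 < delta /\
      forall y, I01 y -> Rabs (y - x) < delta -> Rabs (g y - g x) < eps.

(* Assumption 1: F is a CDF on [0,1], continuously differentiable with
   density f = F', and strictly log-concave, i.e. f/F strictly decreasing
   on (0,1). *)
Definition assumption1 (F f : R -> R) : Prop :=
  is_cdf01 F /\
  has_derivative_on01 F f /\
  continuous_on01 f /\
  (forall x y, 0 < x < 1 -> 0 < y < 1 -> x < y -> f y / F y < f x / F x).

Definition U (v : R) (F : R -> R) (b : R) : R := (v - b) * F b.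

Definition is_argmax (v : R) (F : R -> R) (b : R) : Prop :=
  I01 b /\ forall b', I01 b' -> U v F b' <= U v F b.

Definition is_bstar (v : R) (F : R -> R) (b : R) : Prop :=
  is_argmax v F b /\ forall b', is_argmax v F b' -> b' <= b.

(* Main.v *)
Require Import Defs.
From Stdlib Require Import Reals Lra.
From Coquelicot Require Import Coquelicot.
Open Scope R_scope.

Lemma lim_ed f D l x0 : limit1_in f D l x0 -> forall eps, eps > 0 ->
  exists alp, alp > 0 /\ forall x, D x -> Rabs (x - x0) < alp -> Rabs (f x - l) < eps.
Proof.
  intros H eps He; destruct (H eps He) as [a [Ha H']]; exists a; split; auto.
  intros x Dx Hx; apply (H' x); split; auto.
Qed.

Lemma cont_ed f x0 : (forall eps, eps > 0 ->
  exists alp, alp > 0 /\ forall x, Rabs (x - x0) < alp -> Rabs (f x - f x0) < eps) ->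
  continuity_pt f x0.
Proof.
  intros H eps He; destruct (H eps He) as [a [Ha H']]; exists a; split; auto.
  intros x [_ Hx]; apply H'; exact Hx.
Qed.

Definition cl (x : R) : R := Rmax 0 (Rmin 1 x).

Lemma cl_I01 x : I01 (cl x).
Proof. unfold cl, I01, Rmax, Rmin; repeat destruct Rle_dec; lra. Qed.

Lemma cl_id x : I01 x -> cl x = x.
Proof. unfold cl, I01, Rmax, Rmin; intros; repeat destruct Rle_dec; lra. Qed.

Lemma cl_lip x y : Rabs (cl y - cl x) <= Rabs (y - x).
Proof.
  unfold cl, Rmax, Rmin; repeat destruct Rle_dec;
  unfold Rabs; repeat destruct Rcase_abs; lra.
Qed.

Lemma cont_cl g : continuous_on01 g -> forall x, continuity_pt (fun y => g (cl y)) x.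
Proof.
  intros Hg x; apply cont_ed; intros eps He.
  destruct (Hg (cl x) (cl_I01 x) eps He) as [d [Hd H]].
  exists d; split; auto; intros y Hy.
  apply H. apply cl_I01. pose proof (cl_lip x y); lra.
Qed.

Lemma F_cont F f : has_derivative_on01 F f -> continuous_on01 F.
Proof.
  intros HD x Hx eps He.
  destruct (lim_ed _ _ _ _ (HD x Hx) 1 ltac:(lra)) as [d [Hd H]].
  exists (Rmin d (eps / (Rabs (f x) + 1))).
  assert (0 < eps / (Rabs (f x) + 1)).
  { apply Rdiv_lt_0_compat; [lra|]; pose proof (Rabs_pos (f x)); lra. }
  split. { apply Rmin_glb_lt; lra. }
  intros y Hy Hyx.
  destruct (Req_dec y x) as [->|Hne]. { rewrite Rminus_diag, Rabs_R0; lra. }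
  assert (Hq := H y (conj Hy Hne) ltac:(pose proof (Rmin_l d (eps / (Rabs (f x) + 1))); lra)).
  assert (Hyx0 : y - x <> 0) by lra.
  replace (F y - F x) with (((F y - F x) / (y - x)) * (y - x)) by (field; auto).
  rewrite Rabs_mult.
  assert (Rabs ((F y - F x) / (y - x)) <= Rabs (f x) + 1).
  { pose proof (Rabs_triang_inv ((F y - F x) / (y - x)) (f x)); lra. }
  pose proof (Rmin_r d (eps / (Rabs (f x) + 1))).
  assert (Rabs (y - x) * (Rabs (f x) + 1) < eps).
  { apply (Rmult_lt_compat_r (Rabs (f x) + 1)) in Hyx; [|pose proof (Rabs_pos (f x)); lra].
    assert (eps / (Rabs (f x) + 1) * (Rabs (f x) + 1) = eps) by (field; pose proof (Rabs_pos (f x)); lra).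
    pose proof (Rmin_r d (eps / (Rabs (f x) + 1))).
    apply Rlt_le_trans with (Rmin d (eps / (Rabs (f x) + 1)) * (Rabs (f x) + 1)); [lra|].
    rewrite <- H3 at 2. apply Rmult_le_compat_r; [pose proof (Rabs_pos (f x)); lra| lra]. }
  pose proof (Rabs_pos (y - x)).
  pose proof (Rabs_pos ((F y - F x) / (y - x))).
  nra.
Qed.

Lemma cont_pt_ed g x : continuity_pt g x -> forall eps, eps > 0 ->
  exists alp, alp > 0 /\ forall z, Rabs (z - x) < alp -> Rabs (g z - g x) < eps.
Proof.
  intros H eps He. destruct (lim_ed _ _ _ _ H eps He) as [a [Ha H']].
  exists a; split; auto; intros z Hz.
  destruct (Req_dec z x) as [->|Hne]. { rewrite Rminus_diag, Rabs_R0; lra. }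
  apply H'; auto. split; [exact I| auto].
Qed.

Lemma ratio_cont F f : assumption1 F f -> forall x, I01 x -> 0 < F x ->
  forall eps, eps > 0 -> exists alp, alp > 0 /\ forall z, I01 z -> Rabs (z - x) < alp ->
   Rabs (f z / F z - f x / F x) < eps.
Proof.
  intros [HC [HD [Hfc Hdec]]] x Hx HFx eps He.
  assert (C : continuity_pt (fun z => f (cl z) / F (cl z)) x).
  { apply (continuity_pt_div (fun z => f (cl z)) (fun z => F (cl z))).
    - apply cont_cl; auto.
    - apply cont_cl; eapply F_cont; eauto.
    - rewrite cl_id; auto; lra. }
  destruct (cont_pt_ed _ _ C eps He) as [a [Ha H]].
  exists a; split; auto; intros z Hz Hzx.
  specialize (H z Hzx). rewrite !cl_id in H; auto.
Qed.

Lemma ratio_mono F f : assumption1 F f -> forall x y, I01 x -> I01 y -> x < y -> 0 < F x ->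
  f y / F y <= f x / F x.
Proof.
  intros HA x y Hx Hy Hxy HFx.
  pose proof HA as [[HF01 [HFm HF1]] [HD [Hfc Hdec]]].
  assert (HFy : 0 < F y) by (pose proof (HFm x y Hx Hy ltac:(lra)); lra).
  destruct (Rle_lt_dec (f y / F y) (f x / F x)) as [|Hlt]; auto.
  exfalso. set (e := (f y / F y - f x / F x) / 2).
  assert (He : e > 0) by (unfold e; lra).
  destruct (ratio_cont F f HA x Hx HFx e He) as [ax [Hax Cx]].
  destruct (ratio_cont F f HA y Hy HFy e He) as [ay [Hay Cy]].
  set (x' := x + Rmin (ax/2) ((y-x)/3)).
  set (y' := y - Rmin (ay/2) ((y-x)/3)).
  assert (h1 := Rmin_l (ax/2) ((y-x)/3)). assert (h2 := Rmin_r (ax/2) ((y-x)/3)).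
  assert (h3 := Rmin_l (ay/2) ((y-x)/3)). assert (h4 := Rmin_r (ay/2) ((y-x)/3)).
  assert (h5 : 0 < Rmin (ax/2) ((y-x)/3)) by (apply Rmin_glb_lt; lra).
  assert (h6 : 0 < Rmin (ay/2) ((y-x)/3)) by (apply Rmin_glb_lt; lra).
  unfold I01 in *.
  assert (Hx' : 0 < x' < 1) by (unfold x'; lra).
  assert (Hy' : 0 < y' < 1) by (unfold y'; lra).
  assert (Hxy' : x' < y') by (unfold x', y'; lra).
  pose proof (Hdec x' y' Hx' Hy' Hxy').
  assert (A := Cx x' ltac:(unfold I01; lra) ltac:(unfold x'; rewrite Rabs_right; lra)).
  assert (B := Cy y' ltac:(unfold I01; lra) ltac:(unfold y'; rewrite Rabs_left; lra)).
  apply Rabs_def2 in A. apply Rabs_def2 in B. unfold e in *. lra.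
Qed.

Lemma der_int F f : has_derivative_on01 F f -> forall c, 0 < c < 1 ->
  derivable_pt_lim (fun z => F (cl z)) c (f c).
Proof.
  intros HD c Hc eps He.
  destruct (lim_ed _ _ _ _ (HD c ltac:(unfold I01; lra)) eps He) as [a [Ha H]].
  assert (Hd : 0 < Rmin a (Rmin c (1 - c))) by (repeat apply Rmin_glb_lt; lra).
  exists (mkposreal _ Hd). simpl. intros h Hh Hha.
  pose proof (Rmin_l a (Rmin c (1 - c))). pose proof (Rmin_r a (Rmin c (1 - c))).
  pose proof (Rmin_l c (1 - c)). pose proof (Rmin_r c (1 - c)).
  assert (Hab := Rabs_def2 _ _ Hha).
  rewrite (cl_id (c + h)) by (unfold I01; lra). rewrite (cl_id c) by (unfold I01; lra).
  specialize (H (c + h)).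
  replace (c + h - c) with h in H by ring. apply H; [|lra].
  split; [unfold I01; lra | lra].
Qed.

Lemma foc F f v b : assumption1 F f -> I01 v -> is_argmax v F b -> b < v ->
  f b * (v - b) <= F b.
Proof.
  intros [HC [HD _]] Hv [Hb Hmax] Hbv.
  destruct (Rle_lt_dec (f b * (v - b)) (F b)) as [|HD0]; auto. exfalso.
  set (D := f b * (v - b) - F b).
  destruct (lim_ed _ _ _ _ (HD b Hb) (D/2) ltac:(unfold D; lra)) as [a [Ha H]].
  set (t := Rmin (a/2) (Rmin ((v-b)/2) (D / (4 * (Rabs (f b) + 1))))).
  pose proof (Rabs_pos (f b)).
  assert (HD4 : 0 < D / (4 * (Rabs (f b) + 1))) by (apply Rdiv_lt_0_compat; unfold D; lra).
  assert (Ht : 0 < t) by (unfold t; repeat apply Rmin_glb_lt; lra).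
  assert (t1 : t <= a/2) by apply Rmin_l.
  assert (t2 : t <= (v-b)/2) by (unfold t; eapply Rle_trans; [apply Rmin_r|apply Rmin_l]).
  assert (t3 : t <= D / (4 * (Rabs (f b) + 1))) by (unfold t; eapply Rle_trans; [apply Rmin_r|apply Rmin_r]).
  assert (t3' : t * Rabs (f b) <= D / 4).
  { apply Rle_trans with (D / (4 * (Rabs (f b) + 1)) * (Rabs (f b) + 1)).
    - apply Rle_trans with (t * (Rabs (f b) + 1)); [nra|]. apply Rmult_le_compat_r; lra.
    - right; field; lra. }
  unfold I01 in *.
  set (y := b + t).
  assert (Hy1 : 0 <= y <= 1) by (unfold y; lra).
  assert (Hy2 : y <> b) by (unfold y; intro; lra).
  assert (Hy3 : Rabs (y - b) < a) by (unfold y; replace (b + t - b) with t by ring; rewrite Rabs_right; lra).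
  specialize (H y (conj Hy1 Hy2) Hy3).
  replace (y - b) with t in H by (unfold y; ring).
  set (q := (F y - F b) / t) in H.
  assert (Hq : F y - F b = q * t) by (unfold q; field; lra).
  apply Rabs_def2 in H.
  specialize (Hmax y Hy1). unfold U in Hmax.
  assert (Hvy : v - y = v - b - t) by (unfold y; ring).
  assert (E : (v - y) * q * t <= t * F b) by nra.
  assert (E2 : (v - y) * q <= F b).
  { apply Rmult_le_reg_r with t; lra. }
  assert (Hfb : - Rabs (f b) <= f b) by (pose proof (Rabs_Ropp (f b)); pose proof (Rle_abs (- f b)); lra).
  assert ((v - y) * q >= (v - y) * (f b - D/2)) by nra.
  assert (v - b <= 1) by lra.
  assert (tf : t * f b <= D / 4) by (pose proof (Rle_abs (f b)); nra).
  assert (vD : (v - y) * (D / 2) <= D / 2) by (assert (0 < D) by (unfold D; lra); nra).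
  assert ((v - y) * (f b - D / 2) = (v - b) * f b - t * f b - (v - y) * (D / 2)) by (rewrite Hvy; ring).
  unfold D in *. lra.
Qed.

Theorem lemma4 (F f : R -> R) (HF : assumption1 F f) (v : R) (Hv : I01 v)
  (b : R) (Hb : is_bstar v F b) (Hpos : 0 < F b) :
  F b >= F v / exp 1.
Proof.
  destruct Hb as [Harg _].
  pose proof HF as [[HF01 [HFm HF1]] [HD [Hfc Hdec]]].
  pose proof Harg as [Hb Hmax].
  assert (He1 : 1 < exp 1) by (pose proof (exp_increasing 0 1 ltac:(lra)) as HH; rewrite exp_0 in HH; exact HH).
  assert (Hbv : b <= v).
  { destruct (Rle_lt_dec b v); auto. specialize (Hmax v Hv). unfold U in Hmax.
    rewrite Rminus_diag, Rmult_0_l in Hmax. nra. }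
  destruct (Req_dec b v) as [<-|Hne].
  { pose proof (HF01 b Hb). apply Rle_ge.
    apply Rmult_le_reg_r with (exp 1); [lra|].
    unfold Rdiv; rewrite Rmult_assoc, Rinv_l by lra. nra. }
  assert (Hlt : b < v) by lra.
  assert (HFv : 0 < F v) by (pose proof (HFm b v Hb Hv Hbv); lra).
  unfold I01 in *.
  destruct (MVT_gen (fun z => ln (F (cl z))) b v (fun z => f z / F z)) as [c [Hc Heq]].
  - rewrite Rmin_left, Rmax_right by lra. intros x Hx.
    apply is_derive_Reals.
    assert (Hx01 : I01 x) by (unfold I01; lra).
    assert (HFx : 0 < F x) by (pose proof (HFm b x Hb Hx01 ltac:(lra)); lra).
    replace (f x / F x) with (/ F (cl x) * f x) by (rewrite cl_id; auto; unfold Rdiv; ring).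
    apply (derivable_pt_lim_comp (fun z => F (cl z)) ln).
    + apply der_int; auto; lra.
    + apply derivable_pt_lim_ln. rewrite cl_id; auto.
  - rewrite Rmin_left, Rmax_right by lra. intros x Hx.
    assert (Hx01 : I01 x) by (unfold I01; lra).
    assert (HFx : 0 < F x) by (pose proof (HFm b x Hb Hx01 ltac:(lra)); lra).
    apply (continuity_pt_comp (fun z => F (cl z)) ln).
    + apply cont_cl. eapply F_cont; eauto.
    + apply derivable_continuous_pt. exists (/ F (cl x)).
      apply derivable_pt_lim_ln. rewrite cl_id; auto.
  - rewrite Rmin_left, Rmax_right in Hc by lra.
    rewrite (cl_id v), (cl_id b) in Heq by (unfold I01; lra).
    assert (Hr : f c / F c <= f b / F b).
    { destruct (Req_dec c b) as [->|Hcb]; [lra|].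
      apply (ratio_mono F f HF); unfold I01; auto; lra. }
    assert (Hfoc := foc F f v b HF Hv Harg Hlt).
    assert (Hk : f b / F b * (v - b) <= 1).
    { apply Rmult_le_reg_r with (F b); auto.
      replace (f b / F b * (v - b) * F b) with (f b * (v - b)) by (field; lra). lra. }
    assert (Hln : ln (F v) <= ln (F b) + 1).
    { assert (f c / F c * (v - b) <= f b / F b * (v - b)) by (apply Rmult_le_compat_r; lra).
      lra. }
    assert (Hexp : F v <= F b * exp 1).
    { rewrite <- (exp_ln (F v)), <- (exp_ln (F b)) by auto. rewrite <- exp_plus.
      destruct Hln as [Hl|Hl]; [left; apply exp_increasing; auto | rewrite Hl; lra]. }
    apply Rle_ge. apply Rmult_le_reg_r with (exp 1); [lra|].
    unfold Rdiv; rewrite Rmult_assoc, Rinv_l by lra. lra.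
Qed.
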